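(* Let $\mathbf G_*=(\partial:G_1\to G_0)$ be a crossed module, and let $\mathsf H^0(G_0,G_1)=\{a\in G_1:{}^xa=a\ \forall x\in G_0\}$. Then $\partial$ maps $\mathsf H^0(G_0,G_1)$ into $\mathsf Z_{G_1}(G_0)$, and $\partial:\mathsf H^0(G_0,G_1)\to\mathsf Z_{G_1}(G_0)$ with trivial action is a crossed module $\mathbf Z^{Nor}_*(\mathbf G_* )$. Setting $j_1$ to be the inclusion $\mathsf H^0(G_0,G_1)\subseteq G_1$ and $j_0(x)=(x,\mathbf 1)$, the pair $j_*=(j_1,j_0)$ is an injective morphism of crossed modules $\mathbf Z^{Nor}_*(\mathbf G_* )\to\mathbf Z_*(\mathbf G_* )$ which induces an isomorphism on $\pi_1$ and a monomorphism on $\pi_0$.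
   Context: A crossed module: groups $H_1,H_0$, a homomorphism $\partial:H_1\to H_0$ and a left action $(x,a)\mapsto{}^xa$ of $H_0$ on $H_1$ by automorphisms, with $\partial({}^x a)=x\partial(a)x^{-1}$ and ${}^{\partial(b)}a=bab^{-1}$; $\pi_0=H_0/\mathrm{Im}\partial$, $\pi_1=\ker\partial$. A morphism of crossed modules $(\alpha_1,\alpha_0)$ consists of homomorphisms commuting with $\partial$ and satisfying $\alpha_1({}^xa)={}^{\alpha_0(x)}\alpha_1(a)$. $\mathsf Z_{G_1}(G_0)$ is the set of elements $x$ of the centre of $G_0$ with ${}^xa=a$ for all $a\in G_1$. Commutators $[x,t]=xtx^{-1}t^{-1}$. $\mathbf Z_0(\mathbf G_* )$ is the group of pairs $(x,\xi)$, $x\in G_0$, $\xi:G_0\to G_1$ with $\partial\xi(t)=[x,t]$, $\xi(\partial a)={}^xa\,a^{-1}$, $\xi(st)=\xi(s)\,{}^s\xi(t)$, product $(x,\xi)(y,\eta)=(xy,t\mapsto{}^x\eta(t)\xi(t))$; $\mathbf 1$ is the constant map with value $1$. $\mathbf Z_*(\mathbf G_* )$ is the crossed module $\delta:G_1\to\mathbf Z_0(\mathbf G_* )$, $\delta(c)=(\partial c,\ t\mapsto c\,({}^tc)^{-1})$, with action ${}^{(x,\xi)}a={}^xa$. *)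

(* Defs.v *)
(* groups here are arbitrary (possibly infinite), so we work
   with carrier types equipped with operations, and subgroups given as
   Prop-valued predicates on an ambient carrier. *)

Set Implicit Arguments.

(* A carrier with group operations (axioms are imposed separately, on a subset). *)
Record grpops := GrpOps {
  gcar :> Type;
  gmul : gcar -> gcar -> gcar;
  gone : gcar;
  ginv : gcar -> gcar }.
Arguments gmul {g}.
Arguments gone {g}.
Arguments ginv {g}.

Definition is_group_on {G : grpops} (S : G -> Prop) : Prop :=
  S gone /\
  (forall x y, S x -> S y -> S (gmul x y)) /\
  (forall x, S x -> S (ginv x)) /\
  (forall x y z, S x -> S y -> S z -> gmul x (gmul y z) = gmul (gmul x y) z) /\
  (forall x, S x -> gmul gone x = x /\ gmul x gone = x) /\
  (forall x, S x -> gmul (ginv x) x = gone /\ gmul x (ginv x) = gone).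

Definition is_hom_on {G H : grpops} (S : G -> Prop) (f : G -> H) : Prop :=
  forall x y, S x -> S y -> f (gmul x y) = gmul (f x) (f y).

Definition inj_on {A B : Type} (S : A -> Prop) (f : A -> B) : Prop :=
  forall x y, S x -> S y -> f x = f y -> x = y.

Record xdata := XData {
  xG1 : grpops;
  xG0 : grpops;
  xS1 : xG1 -> Prop;
  xS0 : xG0 -> Prop;
  xd : xG1 -> xG0;
  xact : xG0 -> xG1 -> xG1 }.

Definition is_xmod (X : xdata) : Prop :=
  let S1 := xS1 X in let S0 := xS0 X in let d := xd X in let act := xact X in
  is_group_on S1 /\ is_group_on S0 /\
  (forall a, S1 a -> S0 (d a)) /\ is_hom_on S1 d /\
  (forall x a, S0 x -> S1 a -> S1 (act x a)) /\
  (forall a, S1 a -> act gone a = a) /\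
  (forall x y a, S0 x -> S0 y -> S1 a -> act (gmul x y) a = act x (act y a)) /\
  (forall x a b, S0 x -> S1 a -> S1 b -> act x (gmul a b) = gmul (act x a) (act x b)) /\
  (forall x a, S0 x -> S1 a -> d (act x a) = gmul (gmul x (d a)) (ginv x)) /\
  (forall a b, S1 a -> S1 b -> act (d b) a = gmul (gmul b a) (ginv b)).

Definition is_xmod_morphism (X Y : xdata) (f1 : xG1 X -> xG1 Y) (f0 : xG0 X -> xG0 Y) : Prop :=
  (forall a, xS1 X a -> xS1 Y (f1 a)) /\
  (forall x, xS0 X x -> xS0 Y (f0 x)) /\
  is_hom_on (xS1 X) f1 /\ is_hom_on (xS0 X) f0 /\
  (forall a, xS1 X a -> xd Y (f1 a) = f0 (xd X a)) /\
  (forall x a, xS0 X x -> xS1 X a -> f1 (xact X x a) = xact Y (f0 x) (f1 a)).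

Definition induces_iso_pi1 (X Y : xdata) (f1 : xG1 X -> xG1 Y) : Prop :=
  inj_on (fun a => xS1 X a /\ xd X a = gone) f1 /\
  (forall b, xS1 Y b -> xd Y b = gone ->
     exists a, xS1 X a /\ xd X a = gone /\ f1 a = b).

(* The map induced on pi_0 = S0 / Im d is injective. *)
Definition induces_mono_pi0 (X Y : xdata) (f0 : xG0 X -> xG0 Y) : Prop :=
  forall x y, xS0 X x -> xS0 X y ->
    (exists b, xS1 Y b /\ f0 x = gmul (f0 y) (xd Y b)) ->
    exists a, xS1 X a /\ x = gmul y (xd X a).

Section Constructions.
Variables (G1 G0 : grpops) (d : G1 -> G0) (act : G0 -> G1 -> G1).

Definition comm (x t : G0) : G0 := gmul (gmul (gmul x t) (ginv x)) (ginv t).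

Definition H0set (a : G1) : Prop := forall x : G0, act x a = a.

Definition ZGset (x : G0) : Prop :=
  (forall t : G0, gmul x t = gmul t x) /\ (forall a : G1, act x a = a).

(* Z_0(G_* ) : ambient type G0 * (G0 -> G1) with its group operations *)
Definition Z0mul (p q : G0 * (G0 -> G1)) : G0 * (G0 -> G1) :=
  (gmul (fst p) (fst q), fun t => gmul (act (fst p) ((snd q) t)) ((snd p) t)).
Definition Z0one : G0 * (G0 -> G1) := (gone, fun _ => gone).
Definition Z0inv (p : G0 * (G0 -> G1)) : G0 * (G0 -> G1) :=
  (ginv (fst p), fun t => act (ginv (fst p)) (ginv ((snd p) t))).
Definition Z0ops : grpops := GrpOps Z0mul Z0one Z0inv.

Definition Z0set (p : Z0ops) : Prop :=
  (forall t, d ((snd p) t) = comm (fst p) t) /\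
  (forall a, (snd p) (d a) = gmul (act (fst p) a) (ginv a)) /\
  (forall s t, (snd p) (gmul s t) = gmul ((snd p) s) (act s ((snd p) t))).

Definition delta (c : G1) : Z0ops := (d c, fun t => gmul c (ginv (act t c))).

Definition Gstar : xdata := XData G1 G0 (fun _ => True) (fun _ => True) d act.

Definition ZNor : xdata := XData G1 G0 H0set ZGset d (fun _ a => a).

Definition Zstar : xdata :=
  XData G1 Z0ops (fun _ => True) Z0set delta (fun p a => act (fst p) a).

Definition j1 : G1 -> G1 := fun a => a.
Definition j0 (x : G0) : Z0ops := (x, fun _ => gone).

End Constructions.

Arguments H0set {G1 G0} act a.
Arguments ZGset {G1 G0} act x.
Arguments Gstar {G1 G0} d act.
Arguments ZNor {G1 G0} d act.
Arguments Zstar {G1 G0} d act.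
Arguments Z0set {G1 G0} d act p.
Arguments delta {G1 G0} d act c.

(* Main.v *)
Require Import Defs.
From Stdlib Require Import FunctionalExtensionality Setoid.

Section Aux.
Lemma g_assoc {G : grpops} (gG : is_group_on (fun _ : G => True)) (x y z : G) :
  gmul x (gmul y z) = gmul (gmul x y) z.
Proof. destruct gG as (_&_&_&h&_). apply h; exact I. Qed.
Lemma g_one_l {G : grpops} (gG : is_group_on (fun _ : G => True)) (x : G) : gmul gone x = x.
Proof. destruct gG as (_&_&_&_&h&_). apply h; exact I. Qed.
Lemma g_one_r {G : grpops} (gG : is_group_on (fun _ : G => True)) (x : G) : gmul x gone = x.
Proof. destruct gG as (_&_&_&_&h&_). apply h; exact I. Qed.
Lemma g_inv_l {G : grpops} (gG : is_group_on (fun _ : G => True)) (x : G) : gmul (ginv x) x = gone.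
Proof. destruct gG as (_&_&_&_&_&h). apply h; exact I. Qed.
Lemma g_inv_r {G : grpops} (gG : is_group_on (fun _ : G => True)) (x : G) : gmul x (ginv x) = gone.
Proof. destruct gG as (_&_&_&_&_&h). apply h; exact I. Qed.
Lemma lcancel {G : grpops} (gG : is_group_on (fun _ : G => True)) (a b c : G) :
  gmul a b = gmul a c -> b = c.
Proof.
  intros H. rewrite <- (g_one_l gG b), <- (g_one_l gG c), <- (g_inv_l gG a),
    <- !(g_assoc gG), H; reflexivity.
Qed.
Lemma rcancel {G : grpops} (gG : is_group_on (fun _ : G => True)) (a b c : G) :
  gmul b a = gmul c a -> b = c.
Proof.
  intros H. rewrite <- (g_one_r gG b), <- (g_one_r gG c), <- (g_inv_r gG a),
    !(g_assoc gG), H; reflexivity.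
Qed.
Lemma inv_uniq {G : grpops} (gG : is_group_on (fun _ : G => True)) (u v : G) :
  gmul u v = gone -> v = ginv u.
Proof. intros H. apply (lcancel gG u). rewrite H, (g_inv_r gG); reflexivity. Qed.
Lemma inv_uniq_l {G : grpops} (gG : is_group_on (fun _ : G => True)) (u v : G) :
  gmul u v = gone -> u = ginv v.
Proof. intros H. apply (rcancel gG v). rewrite H, (g_inv_l gG); reflexivity. Qed.
Lemma mul_inv_eq1 {G : grpops} (gG : is_group_on (fun _ : G => True)) (a b : G) :
  gmul a (ginv b) = gone -> a = b.
Proof.
  intros H. rewrite (inv_uniq_l gG _ _ H). symmetry. apply (inv_uniq_l gG).
  apply (g_inv_r gG).
Qed.
End Aux.

Theorem mainTheorem11 (G1 G0 : grpops) (d : G1 -> G0) (act : G0 -> G1 -> G1)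
  (HG : is_xmod (Gstar d act)) :
  (forall a, H0set act a -> ZGset act (d a)) /\
  is_xmod (ZNor d act) /\
  is_xmod_morphism (ZNor d act) (Zstar d act) (@j1 G1) (@j0 G1 G0 act) /\
  inj_on (H0set act) (@j1 G1) /\ inj_on (ZGset act) (@j0 G1 G0 act) /\
  induces_iso_pi1 (ZNor d act) (Zstar d act) (@j1 G1) /\
  induces_mono_pi0 (ZNor d act) (Zstar d act) (@j0 G1 G0 act).
Proof.
  unfold is_xmod in HG; simpl in HG.
  destruct HG as (g1 & g0 & _ & hdh & _ & hact_one & hactM & hactH & hdact & hpeif).
  assert (act1 : forall x, act x gone = gone).
  { intros x. apply (lcancel g1 (act x gone)).
    rewrite <- hactH by exact I. rewrite !(g_one_r g1). reflexivity. }
  assert (d1 : d gone = gone).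
  { apply (lcancel g0 (d gone)).
    rewrite <- hdh by exact I. rewrite (g_one_r g1), (g_one_r g0). reflexivity. }
  assert (actinv : forall x a, act x (ginv a) = ginv (act x a)).
  { intros x a. apply (inv_uniq g1).
    rewrite <- hactH by exact I. rewrite (g_inv_r g1). apply act1. }
  assert (H0comm : forall a b, H0set act a -> gmul b a = gmul a b).
  { intros a b Ha. apply (rcancel g1 (ginv b)).
    rewrite <- hpeif by exact I. rewrite Ha, <- (g_assoc g1), (g_inv_r g1), (g_one_r g1).
    reflexivity. }
  assert (P1 : forall a, H0set act a -> ZGset act (d a)).
  { intros a Ha. split.
    - intros t. assert (E : d a = gmul (gmul t (d a)) (ginv t)).
      { rewrite <- hdact by exact I. rewrite Ha. reflexivity. }
      rewrite E at 1. rewrite <- (g_assoc g0), (g_inv_l g0), (g_one_r g0). reflexivity.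
    - intros b. rewrite hpeif by exact I. rewrite <- (H0comm a b Ha).
      rewrite <- (g_assoc g1), (g_inv_r g1), (g_one_r g1). reflexivity. }
  split; [exact P1|].
  split.
  { unfold is_xmod; simpl.
    split.
    { split; [exact act1|]. split.
      { intros x y Hx Hy z. rewrite hactH by exact I. rewrite Hx, Hy. reflexivity. }
      split.
      { intros x Hx z. rewrite actinv, Hx. reflexivity. }
      split; [intros; apply (g_assoc g1)|].
      split; [intros; split; [apply (g_one_l g1)|apply (g_one_r g1)]|].
      intros; split; [apply (g_inv_l g1)|apply (g_inv_r g1)]. }
    split.
    { split.
      { split; [intros t; rewrite (g_one_l g0), (g_one_r g0); reflexivity|].
        intros a; apply hact_one; exact I. }
      split.
      { intros x y [Hx1 Hx2] [Hy1 Hy2]. split.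
        - intros t. rewrite <- (g_assoc g0), Hy1, (g_assoc g0), Hx1, (g_assoc g0).
          reflexivity.
        - intros a. rewrite hactM by exact I. rewrite Hy2, Hx2. reflexivity. }
      split.
      { intros x [Hx1 Hx2]. split.
        - intros t. apply (lcancel g0 x).
          rewrite (g_assoc g0), (g_inv_r g0), (g_one_l g0), (g_assoc g0), Hx1,
            <- (g_assoc g0), (g_inv_r g0), (g_one_r g0). reflexivity.
        - intros a. rewrite <- (Hx2 a) at 1.
          rewrite <- hactM by exact I. rewrite (g_inv_l g0). apply hact_one; exact I. }
      split; [intros; apply (g_assoc g0)|].
      split; [intros; split; [apply (g_one_l g0)|apply (g_one_r g0)]|].
      intros; split; [apply (g_inv_l g0)|apply (g_inv_r g0)]. }
    split; [exact P1|].
    split; [intros x y _ _; apply hdh; exact I|].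
    split; [intros x a _ Ha; exact Ha|].
    split; [intros a _; reflexivity|].
    split; [intros; reflexivity|].
    split; [intros; reflexivity|].
    split.
    { intros x a [Hx1 _] _. rewrite Hx1, <- (g_assoc g0), (g_inv_r g0), (g_one_r g0).
      reflexivity. }
    intros a b Ha Hb. rewrite (H0comm a b Ha), <- (g_assoc g1), (g_inv_r g1), (g_one_r g1).
    reflexivity. }
  split.
  { unfold is_xmod_morphism; simpl.
    split; [intros; exact I|].
    split.
    { intros x [Hx1 Hx2]. unfold Z0set, j0; simpl. split.
      - intros t. unfold comm. rewrite d1, Hx1, <- (g_assoc g0 t x (ginv x)), (g_inv_r g0 x),
          (g_one_r g0), (g_inv_r g0). reflexivity.
      - split.
        + intros a. rewrite Hx2, (g_inv_r g1). reflexivity.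
        + intros s t. rewrite act1, (g_one_l g1). reflexivity. }
    split; [intros x y _ _; reflexivity|].
    split.
    { intros x y _ _. unfold j0; cbn; unfold Z0mul; cbn. f_equal.
      apply functional_extensionality; intros t. rewrite act1, (g_one_l g1). reflexivity. }
    split.
    { intros a Ha. unfold delta, j0, j1. f_equal.
      apply functional_extensionality; intros t. rewrite Ha, (g_inv_r g1). reflexivity. }
    intros x a [_ Hx2] _. unfold j1, j0; simpl. rewrite Hx2. reflexivity. }
  split; [intros x y _ _ H; exact H|].
  split; [intros x y _ _ H; unfold j0 in H; injection H; auto|].
  split.
  { split; [intros x y _ _ H; exact H|].
    intros b _ Hb. simpl in Hb. unfold delta, Z0one in Hb.
    injection Hb as Hb1 Hb2. exists b. split; [|split; [exact Hb1|reflexivity]].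
    intros t. pose proof (equal_f Hb2 t) as E. simpl in E.
    symmetry. apply (mul_inv_eq1 g1). exact E. }
  intros x y Hx [Hy1 Hy2] [b [_ Hb]]. simpl in Hb. unfold j0, delta, Z0mul in Hb; simpl in Hb.
  injection Hb as Hb1 Hb2. exists b. split; [|exact Hb1].
  intros t. pose proof (equal_f Hb2 t) as E. simpl in E.
  rewrite (g_one_r g1), Hy2 in E. symmetry. apply (mul_inv_eq1 g1). symmetry. exact E.
Qed.
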